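(* Let $\mathcal{H}$ be a complex Hilbert space, let $A\in\mathcal{B}(\mathcal{H})$ be a nonzero positive operator, and let $\mathbb{A}=\begin{pmatrix}A&O\\O&A\end{pmatrix}$ on $\mathcal{H}\oplus\mathcal{H}$. Let $P,Q,R,S\in\mathcal{B}_A(\mathcal{H})$. Then $$\omega_{\mathbb{A}}\left[\begin{pmatrix}P&Q\\R&S\end{pmatrix}\right]\leq\min\{\mu,\nu\},$$ where $$\mu=\tfrac{\sqrt2}{2}\sqrt{\|P\|_A^2+\|Q\|_A^2+\sqrt{(\|P\|_A^2-\|Q\|_A^2)^2+4\|P^{\sharp_A}Q\|_A^2}}+\tfrac{\sqrt2}{2}\sqrt{\|R\|_A^2+\|S\|_A^2+\sqrt{(\|R\|_A^2-\|S\|_A^2)^2+4\|S^{\sharp_A}R\|_A^2}}$$ and $$\nu=\tfrac{\sqrt2}{2}\sqrt{\|P\|_A^2+\|R\|_A^2+\sqrt{(\|P\|_A^2-\|R\|_A^2)^2+4\|PR^{\sharp_A}\|_A^2}}+\tfrac{\sqrt2}{2}\sqrt{\|Q\|_A^2+\|S\|_A^2+\sqrt{(\|Q\|_A^2-\|S\|_A^2)^2+4\|SQ^{\sharp_A}\|_A^2}}.$$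
   Context: For a positive operator $A$ on $\mathcal{H}$, $\langle x,y\rangle_A:=\langle Ax,y\rangle$ and $\|x\|_A:=\sqrt{\langle x,x\rangle_A}$. $\mathcal{B}_A(\mathcal{H})$ is the set of $T\in\mathcal{B}(\mathcal{H})$ with $\mathcal{R}(T^*A)\subseteq\mathcal{R}(A)$; for such $T$, $T^{\sharp_A}$ is the unique solution $X$ of $AX=T^*A$ with $\mathcal{R}(X)\subseteq\overline{\mathcal{R}(A)}$. For $T$ bounded with respect to $\|\cdot\|_A$: $\|T\|_A:=\sup\{\|Tx\|_A:\|x\|_A=1\}$, $\omega_A(T):=\sup\{|\langle Tx,x\rangle_A|:\|x\|_A=1\}$. $\omega_{\mathbb{A}}$ is defined analogously on $\mathcal{H}\oplus\mathcal{H}$ with $\langle (x_1,x_2),(y_1,y_2)\rangle_{\mathbb{A}}=\langle x_1,y_1\rangle_A+\langle x_2,y_2\rangle_A$. *)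

(* Defs.v *)
From HB Require Import structures.
From mathcomp Require Import all_boot all_order all_algebra.
From mathcomp Require Import classical_sets reals.
From mathcomp.real_closed Require Import complex.
Set Implicit Arguments. Unset Strict Implicit. Unset Printing Implicit Defensive.
Import Order.TTheory GRing.Theory Num.Theory.
Local Open Scope ring_scope.
Local Open Scope classical_set_scope.

Section Hilbert.
Variables (R : realType) (V : lmodType R[i]) (ip : V -> V -> R[i]).

Definition hnorm (x : V) : R := Num.sqrt (complex.Re (ip x x)).

Definition is_hilbert : Prop :=
  [/\ (forall (a : R[i]) x y z, ip (a *: x + y) z = a * ip x z + ip y z),
      (forall x y, ip y x = conjc (ip x y)),
      (forall x, 0 <= ip x x),
      (forall x, ip x x = 0 -> x = 0) &
      (forall u : nat -> V,
         (forall e : R, 0 < e -> exists N, forall m n, (N <= m)%N -> (N <= n)%N ->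
              hnorm (u m - u n) < e) ->
         exists l, forall e : R, 0 < e -> exists N, forall n, (N <= n)%N ->
              hnorm (u n - l) < e)].

Definition is_bop (T : V -> V) : Prop :=
  (forall (a : R[i]) x y, T (a *: x + y) = a *: T x + T y) /\
  exists M : R, forall x, hnorm (T x) <= M * hnorm x.

Definition is_adjoint (T Ts : V -> V) : Prop :=
  forall x y, ip (T x) y = ip x (Ts y).

Definition is_positive (A : V -> V) : Prop :=
  is_bop A /\ forall x, 0 <= ip (A x) x.

Definition in_closure_range (A : V -> V) (z : V) : Prop :=
  forall e : R, 0 < e -> exists y, hnorm (z - A y) < e.

Definition in_BA (A T : V -> V) : Prop :=
  is_bop T /\ exists Ts, is_adjoint T Ts /\ forall x, exists y, Ts (A x) = A y.

(* X = T^{#_A}: the (unique) solution of A X = T^* A with R(X) in closure R(A) *)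
Definition is_sharp (A T X : V -> V) : Prop :=
  exists Ts, is_adjoint T Ts /\
    (forall x, A (X x) = Ts (A x)) /\ (forall x, in_closure_range A (X x)).
End Hilbert.

Section Seminorm.
Variables (R : realType) (W : Type) (ip : W -> W -> R[i]) (A : W -> W).

Definition anorm (x : W) : R := Num.sqrt (complex.Re (ip (A x) x)).

Definition opnormA (T : W -> W) : R :=
  sup [set r | exists x, anorm x = 1 /\ r = anorm (T x)].

Definition numradA (T : W -> W) : R :=
  sup [set r | exists x, anorm x = 1 /\ r = complex.Re `|ip (A (T x)) x|].
End Seminorm.

Definition ip2 (R : realType) (V : Type) (ip : V -> V -> R[i])
  (x y : V * V) : R[i] := ip x.1 y.1 + ip x.2 y.2.

Definition diag2 (V : Type) (A : V -> V) (x : V * V) : V * V := (A x.1, A x.2).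

Definition opmx2 (C : pzRingType) (V : lmodType C) (P Q R S : V -> V)
  (x : V * V) : V * V := (P x.1 + Q x.2, R x.1 + S x.2).

Definition bnd (R : realType) (a b c : R) : R :=
  Num.sqrt 2 / 2 * Num.sqrt (a ^+ 2 + b ^+ 2 + Num.sqrt ((a ^+ 2 - b ^+ 2) ^+ 2 + 4 * c ^+ 2)).

(* Main.v *)
Require Import Defs.
From HB Require Import structures.
From mathcomp Require Import all_boot all_order all_algebra.
From mathcomp Require Import classical_sets reals.
From mathcomp.real_closed Require Import complex.
From mathcomp Require Import ring lra.
From mathcomp Require Import boolp topology normedtype sequences.
Import Order.TTheory GRing.Theory Num.Theory.
Local Open Scope ring_scope.
Set Implicit Arguments. Unset Strict Implicit. Unset Printing Implicit Defensive.

Section Cplx.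
Variable R : realType.
Local Notation cRe := (@complex.Re R).
Local Notation cIm := (@complex.Im R).
Lemma cReD (x y : R[i]) : cRe (x + y) = cRe x + cRe y.
Proof. by move: x y => [a b] [c d]. Qed.
Lemma cImD (x y : R[i]) : cIm (x + y) = cIm x + cIm y.
Proof. by move: x y => [a b] [c d]. Qed.
Lemma cReM (x y : R[i]) : cRe (x * y) = cRe x * cRe y - cIm x * cIm y.
Proof. by move: x y => [a b] [c d]. Qed.
Lemma cImM (x y : R[i]) : cIm (x * y) = cRe x * cIm y + cIm x * cRe y.
Proof. move: x y => [a b] [c d] /=. ring. Qed.
Lemma cReJ (x : R[i]) : cRe (conjc x) = cRe x. Proof. by move: x => [a b]. Qed.
Lemma cImJ (x : R[i]) : cIm (conjc x) = - cIm x. Proof. by move: x => [a b]. Qed.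
Lemma cReN (x : R[i]) : cRe (- x) = - cRe x. Proof. by move: x => [a b]. Qed.
Lemma cImN (x : R[i]) : cIm (- x) = - cIm x. Proof. by move: x => [a b]. Qed.
Lemma ceq (x y : R[i]) : cRe x = cRe y -> cIm x = cIm y -> x = y.
Proof. by move: x y => [a b] [c d] /= -> ->. Qed.
Lemma cReC (r : R) : cRe (r%:C)%C = r. Proof. by []. Qed.
Lemma cImC (r : R) : cIm (r%:C)%C = 0. Proof. by []. Qed.
Lemma cRe1 : cRe 1 = 1. Proof. by []. Qed.
Lemma cIm1 : cIm 1 = 0. Proof. by []. Qed.
Lemma cRe0 : cRe 0 = 0. Proof. by []. Qed.
Lemma cIm0 : cIm 0 = 0. Proof. by []. Qed.
Lemma cge0 (z : R[i]) : 0 <= z -> 0 <= cRe z /\ cIm z = 0.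
Proof. by rewrite lecE /= => /andP[/eqP -> ->]. Qed.
Lemma cJJ (z : R[i]) : conjc (conjc z) = z. Proof. exact: conjcK. Qed.
Lemma cJM (x y : R[i]) : conjc (x * y) = (conjc x * conjc y).
Proof. move: x y => [a b] [c d]; apply: ceq => /=; ring. Qed.
Lemma cJD (x y : R[i]) : conjc (x + y) = (conjc x + conjc y).
Proof. move: x y => [a b] [c d]; apply: ceq => /=; ring. Qed.
Lemma cJN (x : R[i]) : conjc (- x) = - conjc x.
Proof. move: x => [a b]; apply: ceq => /=; ring. Qed.
Lemma cJ1 : conjc (1 : R[i]) = 1.
Proof. by apply: ceq => /=; rewrite ?oppr0. Qed.
Lemma cJ0 : conjc (0 : R[i]) = 0.
Proof. by apply: ceq => /=; rewrite ?oppr0. Qed.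
Definition nc (z : R[i]) : R := Num.sqrt (cRe z ^+ 2 + cIm z ^+ 2).
Lemma ncE (z : R[i]) : cRe `|z| = nc z.
Proof. by rewrite normc_def. Qed.
Lemma nc_ge0 z : 0 <= nc z. Proof. exact: sqrtr_ge0. Qed.
Lemma nc_sqr z : nc z ^+ 2 = cRe z ^+ 2 + cIm z ^+ 2.
Proof. rewrite sqr_sqrtr //; apply: addr_ge0; exact: sqr_ge0. Qed.
Lemma ncJ z : nc (conjc z) = nc z.
Proof. by rewrite /nc cReJ cImJ sqrrN. Qed.
Lemma nc_le_add z1 z2 : nc (z1 + z2) <= nc z1 + nc z2.
Proof. rewrite -!ncE. 
have := ler_normD z1 z2. rewrite lecE => /andP[_]. by rewrite cReD.
Qed.
Lemma normcE' (z : R[i]) : Normc.normc z = nc z.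
Proof. by move: z => [a b]. Qed.
End Cplx.
Section Hil.
Variables (R : realType) (V : lmodType R[i]) (ip : V -> V -> R[i]).
Hypothesis hH : is_hilbert ip.
Local Notation cRe := (@complex.Re R).
Local Notation cIm := (@complex.Im R).

Lemma ipDZl a x y z : ip (a *: x + y) z = a * ip x z + ip y z.
Proof. by case: hH. Qed.
Lemma ipC x y : ip y x = conjc (ip x y).
Proof. by case: hH. Qed.
Lemma ip_ge0 x : 0 <= ip x x.
Proof. by case: hH. Qed.
Lemma ip_def x : ip x x = 0 -> x = 0.
Proof. by case: hH => _ _ _ h _; apply: h. Qed.
Lemma ip0l z : ip 0 z = 0.
Proof.
have := ipDZl 1 0 0 z; rewrite scale1r addr0 mul1r => h.
by apply: (@addrI _ (ip 0 z)); rewrite addr0 -h.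
Qed.
Lemma ipDl x y z : ip (x + y) z = ip x z + ip y z.
Proof. by rewrite -[x]scale1r ipDZl mul1r scale1r. Qed.
Lemma ipZl a x z : ip (a *: x) z = a * ip x z.
Proof. by rewrite -[a *: x]addr0 ipDZl ip0l addr0. Qed.
Lemma ipNl x z : ip (- x) z = - ip x z.
Proof. by rewrite -scaleN1r ipZl mulN1r. Qed.
Lemma ipBl x y z : ip (x - y) z = ip x z - ip y z.
Proof. by rewrite ipDl ipNl. Qed.
Lemma ip0r z : ip z 0 = 0.
Proof. by rewrite ipC ip0l cJ0. Qed.
Lemma ipDr x y z : ip z (x + y) = ip z x + ip z y.
Proof. by rewrite ipC ipDl cJD -!ipC. Qed.
Lemma ipZr a x z : ip z (a *: x) = conjc a * ip z x.
Proof. by rewrite ipC ipZl cJM -ipC. Qed.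
Lemma ipNr x z : ip z (- x) = - ip z x.
Proof. by rewrite -scaleN1r ipZr cJN cJ1 mulN1r. Qed.
Lemma ipBr x y z : ip z (x - y) = ip z x - ip z y.
Proof. by rewrite ipDr ipNr. Qed.
Lemma ipRe_sym x y : cRe (ip y x) = cRe (ip x y).
Proof. by rewrite ipC cReJ. Qed.

Section PosOp.
Variable B : V -> V.
Hypothesis Blin : forall a x y, B (a *: x + y) = a *: B x + B y.
Hypothesis Bpos : forall x, 0 <= ip (B x) x.
Hypothesis Bsa : forall x y, ip (B x) y = ip x (B y).

Lemma B0 : B 0 = 0.
Proof.
have := Blin 1 0 0; rewrite !scale1r addr0 => h.
by apply: (@addrI _ (B 0)); rewrite addr0 -h.
Qed.
Lemma BD x y : B (x + y) = B x + B y.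
Proof. by rewrite -[x]scale1r Blin !scale1r. Qed.
Lemma BZ a x : B (a *: x) = a *: B x.
Proof. by rewrite -[a *: x]addr0 Blin B0 addr0. Qed.

Definition qf x := cRe (ip (B x) x).
Definition nf x := Num.sqrt (qf x).

Lemma qf_ge0 x : 0 <= qf x. Proof. exact: (cge0 (Bpos x)).1. Qed.
Lemma qf_Im x : cIm (ip (B x) x) = 0. Proof. exact: (cge0 (Bpos x)).2. Qed.
Lemma nf_ge0 x : 0 <= nf x. Proof. exact: sqrtr_ge0. Qed.
Lemma nf_sqr x : nf x ^+ 2 = qf x. Proof. by rewrite sqr_sqrtr // qf_ge0. Qed.
Lemma ReB_sym x y : cRe (ip (B y) x) = cRe (ip (B x) y).
Proof. by rewrite Bsa ipRe_sym. Qed.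

Lemma qfD x y : qf (x + y) = qf x + qf y + 2 * cRe (ip (B x) y).
Proof.
rewrite /qf BD !ipDl !ipDr !cReD ReB_sym. ring.
Qed.
Lemma ipBZ a x : ip (B (a *: x)) (a *: x) = a * conjc a * ip (B x) x.
Proof. by rewrite BZ ipZl ipZr mulrA. Qed.
Lemma qfZ a x : qf (a *: x) = (cRe a ^+ 2 + cIm a ^+ 2) * qf x.
Proof.
rewrite /qf ipBZ cReM qf_Im cReM cImM cReJ cImJ. ring.
Qed.
Lemma nfZ a x : nf (a *: x) = nc a * nf x.
Proof.
rewrite /nf qfZ sqrtrM //; apply: addr_ge0; exact: sqr_ge0.
Qed.
Lemma nfZr (r : R) x : nf (r%:C%C *: x) = `|r| * nf x.
Proof. by rewrite nfZ /nc cReC cImC expr0n addr0 sqrtr_sqr. Qed.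

Lemma discr (a b c : R) : 0 <= a -> 0 <= c ->
  (forall t : R, 0 <= a + 2 * t * b + t ^+ 2 * c) -> b ^+ 2 <= a * c.
Proof.
move=> a0 c0 H.
have [cz|cp] := eqVneq c 0.
  subst c. rewrite mulr0.
  have [bz|bnz] := eqVneq b 0; first by rewrite bz expr0n.
  have := H (- (a + 1) / (2 * b)). rewrite mulr0 addr0.
  have -> : 2 * (- (a + 1) / (2 * b)) * b = - (a + 1).
    by field; rewrite bnz.
  move=> h; exfalso; lra.
have cpos : 0 < c by rewrite lt_def cp.
have := H (- b / c).
have ht : (- b / c) * c = - b by field; rewrite cp.
move: (- b / c) ht => t ht h.
have h2 : 0 <= c * (a + 2 * t * b + t ^+ 2 * c) by apply: mulr_ge0 => //; exact: ltW.
have e : c * (a + 2 * t * b + t ^+ 2 * c) = a * c - b ^+ 2.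
  have -> : c * (a + 2 * t * b + t ^+ 2 * c) = a * c + 2 * (t * c) * b + (t * c) ^+ 2 by ring.
  rewrite ht; ring.
rewrite e in h2; lra.
Qed.

Lemma CS_Re x y : cRe (ip (B x) y) <= nf x * nf y.
Proof.
set b := cRe (ip (B x) y).
have H : forall t : R, 0 <= qf x + 2 * t * b + t ^+ 2 * qf y.
  move=> t; have := qf_ge0 (x + t%:C%C *: y).
  rewrite qfD qfZ cReC cImC expr0n addr0 ipZr.
  rewrite cReM cReJ cImJ cReC cImC -/b. lra.
have := discr (qf_ge0 x) (qf_ge0 y) H.
rewrite -!nf_sqr -exprMn => h.
have : `|b| <= nf x * nf y.
  by rewrite -ler_sqr ?nnegrE ?normr_ge0 ?mulr_ge0 ?nf_ge0 // real_normK ?num_real.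
move=> /(le_trans (ler_norm b)). done.
Qed.

Lemma CS x y : nc (ip (B x) y) <= nf x * nf y.
Proof.
set z := ip (B x) y.
have ncp := nc_ge0 z.
have [z0|zn0] := eqVneq (nc z) 0; first by rewrite z0 mulr_ge0 ?nf_ge0.
have npos : 0 < nc z by rewrite lt_def zn0.
have h := CS_Re (conjc z *: x) y.
rewrite BZ ipZl nfZ ncJ -/z cReM cReJ cImJ in h.
have e : cRe z * cRe z - - cIm z * cIm z = nc z * nc z.
  by rewrite -[nc z * nc z]expr2 nc_sqr; ring.
rewrite e -mulrA in h.
by rewrite -(ler_pM2l npos).
Qed.

Lemma nf_tri x y : nf (x + y) <= nf x + nf y.
Proof.
rewrite /nf -ler_sqr ?nnegrE ?addr_ge0 ?sqrtr_ge0 //.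
rewrite sqr_sqrtr ?qf_ge0 // qfD sqrrD !sqr_sqrtr ?qf_ge0 //.
have := CS_Re x y; rewrite /nf. lra.
Qed.
End PosOp.

Lemma ipBexp (B : V -> V) (Blin : forall a x y, B (a *: x + y) = a *: B x + B y) a x y :
  ip (B (x + a *: y)) (x + a *: y) =
  ip (B x) x + conjc a * ip (B x) y + a * ip (B y) x + a * conjc a * ip (B y) y.
Proof.
have BD x1 y1 : B (x1 + y1) = B x1 + B y1 by rewrite -[x1]scale1r Blin !scale1r.
have B0 : B 0 = 0.
  have := Blin 1 0 0; rewrite !scale1r addr0 => h.
  by apply: (@addrI _ (B 0)); rewrite addr0 -h.
have BZ a1 x1 : B (a1 *: x1) = a1 *: B x1 by rewrite -[a1 *: x1]addr0 Blin B0 addr0.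
rewrite BD BZ !ipDl !ipDr !ipZl !ipZr. ring.
Qed.

Lemma pos_sa (B : V -> V) (Blin : forall a x y, B (a *: x + y) = a *: B x + B y)
  (Bpos : forall x, 0 <= ip (B x) x) x y : ip (B x) y = ip x (B y).
Proof.
have Im0 u : cIm (ip (B u) u) = 0 by exact: (cge0 (Bpos u)).2.
have e1 := ipBexp Blin 1 x y.
have e2 := ipBexp Blin 'i%C x y.
have := congr1 cIm e1; have := congr1 cIm e2.
rewrite ?cImD ?cImM ?cReM ?cImM ?cReD ?Im0 ?cReJ ?cImJ /=.
move=> h2 h1.
rewrite [ip x (B y)]ipC.
apply: ceq; rewrite ?cReJ ?cImJ; lra.
Qed.

Lemma ip_ext p q : (forall u, ip u p = ip u q) -> p = q.
Proof.
move=> h; apply/eqP; rewrite -subr_eq0; apply/eqP; apply: ip_def.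
by rewrite ipBr h subrr.
Qed.

Lemma Ilin (a : R[i]) (x y : V) : id (a *: x + y) = a *: id x + id y. Proof. by []. Qed.
Lemma Ipos (x : V) : 0 <= ip (id x) x. Proof. exact: ip_ge0. Qed.
Lemma Isa (x y : V) : ip (id x) y = ip x (id y). Proof. by []. Qed.

Local Notation hn := (hnorm ip).
Lemma hnE x : hn x = nf id x. Proof. by []. Qed.
Lemma hn_ge0 x : 0 <= hn x. Proof. exact: sqrtr_ge0. Qed.
Lemma hCS x y : nc (ip x y) <= hn x * hn y.
Proof. exact: (CS Ilin Ipos Isa). Qed.
Lemma hCS_Re x y : cRe (ip x y) <= hn x * hn y.
Proof. exact: (CS_Re Ilin Ipos Isa). Qed.
Lemma htri x y : hn (x + y) <= hn x + hn y.
Proof. exact: (nf_tri Ilin Ipos Isa). Qed.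
Lemma hZr (r : R) x : hn (r%:C%C *: x) = `|r| * hn x.
Proof. exact: (nfZr Ilin Ipos). Qed.
Lemma hN x : hn (- x) = hn x.
Proof.
rewrite -scaleN1r (_ : -1 = (-1)%:C%C); last by apply: ceq => /=; rewrite ?oppr0.
by rewrite hZr normrN normr1 mul1r.
Qed.
Lemma hn_sqr x : hn x ^+ 2 = cRe (ip x x).
Proof. exact: (nf_sqr Ipos). Qed.
Lemma hn_eq0 x : hn x = 0 -> x = 0.
Proof.
move=> h; apply: ip_def; apply: ceq; last by rewrite (qf_Im Ipos).
by rewrite -hn_sqr h expr0n.
Qed.
Lemma hn0 : hn 0 = 0.
Proof. by rewrite /hnorm ip0l /= sqrtr0. Qed.

Variable A : V -> V.
Hypothesis hA : is_positive ip A.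

Lemma Alin a x y : A (a *: x + y) = a *: A x + A y.
Proof. by case: hA => -[]. Qed.
Lemma Apos x : 0 <= ip (A x) x.
Proof. by case: hA. Qed.
Lemma Asa x y : ip (A x) y = ip x (A y).
Proof. exact: (pos_sa Alin Apos). Qed.
Lemma AD x y : A (x + y) = A x + A y. Proof. exact: (BD Alin). Qed.
Lemma AZ a x : A (a *: x) = a *: A x. Proof. exact: (BZ Alin). Qed.
Lemma A0 : A 0 = 0. Proof. exact: (B0 Alin). Qed.
Lemma AB x y : A (x - y) = A x - A y.
Proof. by rewrite AD -scaleN1r AZ scaleN1r. Qed.

Local Notation an := (anorm ip A).
Lemma anE x : an x = nf A x. Proof. by []. Qed.
Lemma an_ge0 x : 0 <= an x. Proof. exact: sqrtr_ge0. Qed.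
Lemma aCS x y : nc (ip (A x) y) <= an x * an y.
Proof. exact: (CS Alin Apos Asa). Qed.
Lemma aCS_Re x y : cRe (ip (A x) y) <= an x * an y.
Proof. exact: (CS_Re Alin Apos Asa). Qed.
Lemma atri x y : an (x + y) <= an x + an y.
Proof. exact: (nf_tri Alin Apos Asa). Qed.
Lemma aZr (r : R) x : an (r%:C%C *: x) = `|r| * an x.
Proof. exact: (nfZr Alin Apos). Qed.
Lemma a_sqr x : an x ^+ 2 = cRe (ip (A x) x).
Proof. exact: (nf_sqr Apos). Qed.
Lemma aD_sqr x y : an (x + y) ^+ 2 = an x ^+ 2 + an y ^+ 2 + 2 * cRe (ip (A x) y).
Proof. rewrite !a_sqr; exact: (qfD Alin Asa). Qed.

Lemma adjZ T Ts : is_bop ip T -> is_adjoint ip T Ts ->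
  forall a x, Ts (a *: x) = a *: Ts x.
Proof.
move=> [Tlin _] hadj a x; apply: ip_ext => u.
by rewrite -hadj !ipZr -hadj.
Qed.
Lemma adjD T Ts : is_adjoint ip T Ts -> forall x y, Ts (x + y) = Ts x + Ts y.
Proof.
move=> hadj x y; apply: ip_ext => u.
by rewrite -hadj !ipDr -!hadj.
Qed.

Lemma clr_uniq z : in_closure_range ip A z -> A z = 0 -> z = 0.
Proof.
move=> hz Az; apply: hn_eq0.
have key : forall e, 0 < e -> hn z ^+ 2 <= hn z * e.
  move=> e e0; have [y hy] := hz e e0.
  rewrite hn_sqr (_ : ip z z = ip z (A y) + ip z (z - A y)); last first.
    by rewrite -ipDr addrC subrK.
  rewrite cReD.
  have -> : ip z (A y) = 0 by rewrite -Asa Az ip0l.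
  rewrite cRe0 add0r.
  apply: le_trans (hCS_Re _ _) _.
  by rewrite ler_wpM2l ?hn_ge0 // ltW.
have hp := hn_ge0 z.
apply/eqP; rewrite eq_le hp andbT.
apply/ler_addgt0Pr => e e0. rewrite add0r.
have [hz0|hzp] := eqVneq (hn z) 0; first by rewrite hz0 ltW.
have hzpos : 0 < hn z by rewrite lt_def hzp.
have := key e e0; rewrite expr2 ler_pM2l //.
Qed.

Lemma clrB z1 z2 : in_closure_range ip A z1 -> in_closure_range ip A z2 ->
  in_closure_range ip A (z1 - z2).
Proof.
move=> h1 h2 e e0.
have e2 : 0 < e / 2 by rewrite divr_gt0.
have [y1 hy1] := h1 _ e2; have [y2 hy2] := h2 _ e2.
exists (y1 - y2); rewrite AB.
have -> : z1 - z2 - (A y1 - A y2) = (z1 - A y1) + - (z2 - A y2).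
  by rewrite !opprB addrACA [RHS]addrACA [- A y1 + _]addrC.
apply: le_lt_trans (htri _ _) _; rewrite hN.
have -> : e = e / 2 + e / 2 by rewrite -splitr.
exact: ltrD.
Qed.

Lemma clrZ (r : R) z : in_closure_range ip A z -> in_closure_range ip A (r%:C%C *: z).
Proof.
move=> h e e0.
have e1 : 0 < e / (`|r| + 1) by rewrite divr_gt0 // ltr_wpDl.
have [y hy] := h _ e1.
exists (r%:C%C *: y); rewrite AZ -scalerBr hZr.
have hr : 0 < `|r| + 1 by rewrite ltr_wpDl.
apply: (@le_lt_trans _ _ ((`|r| + 1) * hn (z - A y))).
  by rewrite ler_wpM2r ?hn_ge0 // lerDl.
by rewrite -ltr_pdivlMl // mulrC.
Qed.

Lemma sharpZ T X : is_bop ip T -> is_sharp ip A T X ->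
  forall (r : R) x, X (r%:C%C *: x) = r%:C%C *: X x.
Proof.
move=> hT [Ts [hadj [hAX hcl]]] r x.
apply/eqP; rewrite -subr_eq0; apply/eqP; apply: clr_uniq.
  by apply: clrB => //; apply: clrZ.
by rewrite AB hAX AZ (adjZ hT hadj) AZ hAX subrr.
Qed.

Definition VR : Type := V.
HB.instance Definition _ := GRing.Zmodule.on VR.
Definition scR (r : R) (x : VR) : VR := (r%:C%C *: (x : V)).
Lemma scRA a b v : scR a (scR b v) = scR (a * b) v.
Proof. by rewrite /scR scalerA -rmorphM. Qed.
Lemma scR1 : left_id 1 scR.
Proof. by move=> v; rewrite /scR rmorph1 scale1r. Qed.
Lemma scRDr : right_distributive scR +%R.
Proof. by move=> a u v; rewrite /scR scalerDr. Qed.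
Lemma scRDl v : {morph scR^~ v: a b / a + b}.
Proof. by move=> a b; rewrite /scR rmorphD scalerDl. Qed.
HB.instance Definition _ := GRing.Zmodule_isLmodule.Build R VR scRA scR1 scRDr scRDl.
Lemma htri' (x y : VR) : hn (x + y) <= hn x + hn y. Proof. exact: htri. Qed.
Lemma hZr' (l : R) (x : VR) : hn (l *: x) = `|l| * hn x. Proof. exact: hZr. Qed.
Lemma hn_eq0' (x : VR) : hn x = 0 -> x = 0. Proof. exact: hn_eq0. Qed.
HB.instance Definition _ := Lmodule_isNormed.Build R VR htri' hZr' hn_eq0'.

Lemma ballVR (x : VR) e y : ball x e y <-> hn (x - y) < e.
Proof. by rewrite -ball_normE. Qed.

Lemma VR_complete (F : set_system VR) : ProperFilter F -> cauchy F -> cvg F.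
Proof.
move=> FF /cauchyP Fc.
have /choice [c hc] : forall n : nat, exists x : VR, F (ball x (n.+1%:R^-1)).
  by move=> n; apply: Fc; rewrite invr_gt0 ltr0n.
have hcm m n : hn (c m - c n) < m.+1%:R^-1 + n.+1%:R^-1.
  have [z [hz1 hz2]] := filter_ex (filterI (hc m) (hc n)).
  move/ballVR : hz1 => h1; move/ballVR : hz2 => h2.
  have -> : c m - c n = (c m - z) + - (c n - z) by rewrite opprB addrA subrK.
  apply: le_lt_trans (htri _ _) _.
  rewrite hN.
  exact: ltrD.
have hsmall (e : R) : 0 < e -> exists N : nat, forall n, (N <= n)%N -> n.+1%:R^-1 < e.
  move=> e0; exists (Num.truncn (e^-1)) => n hn.
  rewrite invf_plt ?posrE ?ltr0n //.
  apply: lt_le_trans (truncnS_gt _) _.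
  by rewrite ler_nat ltnS.
have cauchyc : forall e : R, 0 < e -> exists N, forall m n, (N <= m)%N -> (N <= n)%N ->
    hn (c m - c n) < e.
  move=> e e0.
  have e2 : 0 < e / 2 by rewrite divr_gt0.
  have [N hNN] := hsmall _ e2.
  exists N => m n hm hn; apply: lt_le_trans (hcm m n) _.
  rewrite [e]splitr; apply: lerD; apply: ltW; [exact: hNN | exact: hNN].
have [l hl] : exists l, forall e : R, 0 < e -> exists N, forall n, (N <= n)%N ->
    hn (c n - l) < e.
  by case: hH => _ _ _ _ /(_ c cauchyc).
apply/cvg_ex; exists l => B /nbhs_ballP [e /= e0 hB].
have e2 : 0 < e / 2 by rewrite divr_gt0.
have [N1 hN1] := hsmall _ e2.
have [N2 hN2] := hl _ e2.
set n := maxn N1 N2.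
apply: filterS (hc n) => y /ballVR hy; apply: hB; apply/ballVR.
have -> : l - y = - (c n - l) + (c n - y) by rewrite opprB addrA subrK.
apply: le_lt_trans (htri _ _) _.
rewrite hN.
rewrite [e]splitr; apply: ltrD.
  by apply: hN2; rewrite leq_maxr.
apply: lt_trans hy _; apply: hN1; by rewrite leq_maxl.
Qed.
HB.instance Definition _ := Uniform_isComplete.Build VR VR_complete.

Lemma absRe_nc (z : R[i]) : `|cRe z| <= nc z.
Proof.
rewrite /nc -sqrtr_sqr ler_sqrt ?lerDl ?sqr_ge0 //.
by apply: addr_ge0; apply: sqr_ge0.
Qed.

Lemma ubp (G : set V) :
  (forall y, exists M, forall w, G w -> `|cRe (ip y w)| <= M) ->
  exists M, forall w, G w -> forall y, hn y <= 1 -> `|cRe (ip y w)| <= M.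
Proof.
move=> hpt.
pose F : set (VR -> R^o) := fun f => exists w, G w /\ f = (fun y : VR => (cRe (ip y w) : R^o)).
have hF : forall f, F f -> bounded_fun_norm f /\ linear f.
  move=> f [w [Gw ->]]; split.
    move=> r; exists (`|r| * hn w) => x hx.
    apply: le_trans (absRe_nc _) _; apply: le_trans (hCS _ _) _.
    by rewrite ler_wpM2r ?hn_ge0 // (le_trans hx) ?ler_norm.
  move=> a u v /=.
  by rewrite /GRing.scale /= ipDl ipZl cReD cReM cReC cImC mul0r subr0.
have pb : pointwise_bounded F.
  move=> y; have [M hM] := hpt y; exists M => f [w [Gw ->]]; exact: hM.
have [M hM] := Banach_Steinhauss hF pb 1.
exists M => w Gw y hy.
have hFw : F (fun y : VR => (cRe (ip y w) : R^o)) by exists w.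
exact: (hM _ hFw y hy).
Qed.

Lemma le_eps (a b c : R) : 0 <= c -> (forall e, 0 < e -> a <= b + c * e) -> a <= b.
Proof.
move=> c0 H; case: (lerP a b) => // hab; exfalso.
set d := a - b.
have d0 : 0 < d by rewrite subr_gt0.
have c1 : 0 < c + 1 by rewrite ltr_wpDl.
set e := d / (c + 1).
have e0 : 0 < e by rewrite divr_gt0.
have := H e e0.
have h1 : (c + 1) * (c * e) = c * d by rewrite /e; field; rewrite gt_eqF.
have h2 : c * e < d.
  rewrite -(ltr_pM2l c1) h1; nra.
move=> h3; rewrite /d in h2; lra.
Qed.

Lemma linZ (T : V -> V) : (forall a x y, T (a *: x + y) = a *: T x + T y) ->
  forall a x, T (a *: x) = a *: T x.
Proof. exact: BZ. Qed.

Lemma ReZZ (r s : R) x y : cRe (ip (r%:C%C *: x) (s%:C%C *: y)) = r * s * cRe (ip x y).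
Proof.
rewrite ipZl ipZr cReM cReC cImC mul0r subr0 cReM /= oppr0 mul0r subr0 mulrA; ring.
Qed.

Lemma sharp_hbound T X : is_bop ip T -> is_sharp ip A T X ->
  exists M, 0 <= M /\ forall y, hn (X y) <= M * hn y.
Proof.
move=> hT [Ts [hadj [hAX hcl]]].
have [Tlin _] := hT.
have key y u : ip y (A (T u)) = conjc (ip (A u) (X y)).
  by rewrite -Asa ipC hadj -hAX Asa.
have keyRe y u : cRe (ip y (A (T u))) = cRe (ip (A u) (X y)).
  by rewrite key cReJ.
pose G : set V := fun w => exists u, hn (A u) <= 1 /\ w = A (T u).
have hpt : forall y, exists M, forall w, G w -> `|cRe (ip y w)| <= M.
  move=> y; exists (hn (X y)) => w [u [hu ->]].
  rewrite keyRe; apply: le_trans (absRe_nc _) _; apply: le_trans (hCS _ _) _.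
  by rewrite -[X in _ <= X]mul1r ler_wpM2r ?hn_ge0.
have [M0 hM0] := ubp hpt.
have G0 : G (A (T 0)) by exists 0; rewrite A0 hn0 ler01.
have M0p : 0 <= M0.
  have := hM0 _ G0 0; rewrite hn0 ler01 => /(_ isT); by apply: le_trans.
have gen y u : cRe (ip y (A (T u))) <= M0 * hn y * hn (A u).
  have [p0|pn0] := eqVneq (hn y) 0.
    by rewrite p0 (hn_eq0 p0) ip0l cRe0 mulr0 mul0r.
  have [q0|qn0] := eqVneq (hn (A u)) 0.
    by rewrite q0 keyRe (hn_eq0 q0) ip0l cRe0 mulr0.
  have pp : 0 < hn y by rewrite lt_def pn0 hn_ge0.
  have qp : 0 < hn (A u) by rewrite lt_def qn0 hn_ge0.
  set y' := ((hn y)^-1)%:C%C *: y.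
  set u' := ((hn (A u))^-1)%:C%C *: u.
  have hy' : hn y' <= 1 by rewrite hZr ger0_norm ?invr_ge0 ?hn_ge0 // mulVf.
  have hu' : hn (A u') <= 1 by rewrite AZ hZr ger0_norm ?invr_ge0 ?hn_ge0 // mulVf.
  have Gu : G (A (T u')) by exists u'.
  have := hM0 _ Gu _ hy'.
  rewrite /y' /u' (linZ Tlin) AZ ReZZ.
  move=> /(le_trans (ler_norm _)).
  move=> hle.
  set z := cRe (ip y (A (T u))) in hle *.
  have -> : z = (hn y * hn (A u)) * ((hn y)^-1 / hn (A u) * z).
    by field; rewrite pn0 qn0.
  have -> : M0 * hn y * hn (A u) = (hn y * hn (A u)) * M0 by ring.
  apply: ler_wpM2l => //.
  by rewrite mulr_ge0 ?hn_ge0.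
exists M0; split => // y.
set h := hn (X y).
have hh : 0 <= h by apply: hn_ge0.
have step : forall e, 0 < e -> h ^+ 2 <= M0 * hn y * h + (M0 * hn y + h) * e.
  move=> e e0; have [u hu] := hcl y e e0.
  have -> : h ^+ 2 = cRe (ip (X y) (A u)) + cRe (ip (X y) (X y - A u)).
    by rewrite /h hn_sqr -cReD -ipDr addrC subrK.
  have e1 : cRe (ip (X y) (A u)) <= M0 * hn y * hn (A u).
    by rewrite ipRe_sym -keyRe gen.
  have e2 : hn (A u) <= h + e.
    have -> : A u = X y + - (X y - A u) by rewrite opprB addrC subrK.
    apply: le_trans (htri _ _) _; rewrite hN lerD2l; exact: ltW.
  have e3 : cRe (ip (X y) (X y - A u)) <= h * e.
    apply: le_trans (hCS_Re _ _) _; rewrite ler_wpM2l //; exact: ltW.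
  have hMy : 0 <= M0 * hn y by rewrite mulr_ge0 ?hn_ge0.
  have := ler_wpM2l hMy e2.
  nra.
have hMy : 0 <= M0 * hn y by rewrite mulr_ge0 ?hn_ge0.
have := le_eps (addr_ge0 hMy hh) step.
have [h0|hn0'] := eqVneq h 0; first by rewrite h0 => _.
have hp : 0 < h by rewrite lt_def hn0' hh.
by rewrite expr2 [M0 * hn y * h]mulrC ler_pM2l.
Qed.

Lemma bernoulli_ge (t : R) (n : nat) : 1 <= t -> 1 + n%:R * (t - 1) <= t ^+ n.
Proof.
move=> t1; elim: n => [|n IH]; first by rewrite mul0r addr0 expr0.
rewrite exprS.
have h : t * (1 + n%:R * (t - 1)) <= t * t ^+ n by rewrite ler_wpM2l // (le_trans ler01).
apply: le_trans h; rewrite -natr1.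
have hn : 0 <= n%:R :> R by exact: ler0n.
have := mulr_ge0 hn (sqr_ge0 (t - 1)). nra.
Qed.

Lemma unbounded_pow (t C : R) : 1 < t -> exists n : nat, C < t ^+ (2 ^ n)%N.
Proof.
move=> t1.
have tp : 0 < t - 1 by rewrite subr_gt0.
exists (Num.truncn (`|C| / (t - 1))).+1.
set n := (Num.truncn _).+1.
have h1 := truncnS_gt (`|C| / (t - 1)).
have h2 : `|C| < n%:R * (t - 1) by rewrite -ltr_pdivrMr.
have h3 : n%:R <= (2 ^ n)%N%:R :> R by rewrite ler_nat ltnW // ltn_expl.
apply: lt_le_trans (bernoulli_ge _ (ltW t1)).
have : C <= `|C| := ler_norm C.
have : n%:R * (t - 1) <= (2 ^ n)%N%:R * (t - 1) by rewrite ler_wpM2r // ltW.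
lra.
Qed.

Lemma a_bound T X : is_bop ip T -> is_sharp ip A T X ->
  exists k, 0 <= k /\ forall x, an (T x) <= k * an x.
Proof.
move=> hT hX.
have [M [M0 hM]] := sharp_hbound hT hX.
case: hT => Tlin [MT hMT].
case: hX => Ts [hadj [hAX _]].
case: hA => [[_ [MA hMA]] _].
set kk := M * `|MT|.
have kk0 : 0 <= kk by rewrite mulr_ge0.
pose K := fun x => X (T x).
have hK x : hn (K x) <= kk * hn x.
  apply: le_trans (hM _) _; rewrite /kk -mulrA ler_wpM2l //.
  apply: le_trans (hMT x) _; rewrite ler_wpM2r ?hn_ge0 //; exact: ler_norm.
have Ksa x y : ip (A (K x)) y = ip x (A (K y)).
  rewrite /K !hAX -hadj ipC -hadj.
  by rewrite [RHS]ipC Asa.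
have Kn_sa n x y : ip (A (iter n K x)) y = ip x (A (iter n K y)).
  elim: n x y => [|n IH] x y /=; first exact: Asa.
  by rewrite Ksa -Asa IH -iterSr.
have Kn_bd n x : hn (iter n K x) <= kk ^+ n * hn x.
  elim: n => [|n IH] /=; first by rewrite expr0 mul1r.
  apply: le_trans (hK _) _; rewrite exprS -mulrA ler_wpM2l //.
exists (Num.sqrt kk); split; first exact: sqrtr_ge0.
move=> x.
set a := cRe (ip (A x) x).
have a0 : 0 <= a by rewrite /a -a_sqr sqr_ge0.
pose f n := cRe (ip (A (iter (2 ^ n)%N K x)) x).
have f0E : f 0%N = an (T x) ^+ 2.
  rewrite /f /= a_sqr /K hAX ipC -hadj cReJ ipRe_sym.
  by [].
have f0p : 0 <= f 0%N by rewrite f0E sqr_ge0.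
have fsq n : f n ^+ 2 <= a * f n.+1.
  set u := iter (2 ^ n)%N K x.
  have e1 : an u ^+ 2 = f n.+1.
    rewrite a_sqr Kn_sa ipRe_sym /f /u -iterD.
    by rewrite expnS mul2n -addnn.
  have h1 : `|f n| <= an u * an x.
    apply: le_trans (absRe_nc _) _; exact: aCS.
  have h2 : `|f n| ^+ 2 <= (an u * an x) ^+ 2.
    by rewrite ler_sqr ?nnegrE ?normr_ge0 ?mulr_ge0 ?an_ge0.
  rewrite real_normK ?num_real // in h2.
  by rewrite exprMn e1 a_sqr mulrC in h2.
have fbd n : f n <= `|MA| * kk ^+ (2 ^ n)%N * hn x ^+ 2.
  apply: le_trans (ler_norm _) _; apply: le_trans (absRe_nc _) _.
  apply: le_trans (hCS _ _) _.
  set w := iter (2 ^ n)%N K x.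
  apply: le_trans (_ : _ <= (`|MA| * hn w) * hn x) _.
    rewrite ler_wpM2r ?hn_ge0 //; apply: le_trans (hMA _) _.
    by rewrite ler_wpM2r ?hn_ge0 ?ler_norm.
  rewrite expr2 !mulrA ler_wpM2r ?hn_ge0 // -mulrA ler_wpM2l //.
  exact: Kn_bd.
suff : an (T x) ^+ 2 <= kk * an x ^+ 2.
  move=> h; rewrite -ler_sqr ?nnegrE ?mulr_ge0 ?an_ge0 ?sqrtr_ge0 //.
  by rewrite exprMn [Num.sqrt kk ^+ 2]sqr_sqrtr.
rewrite [an x ^+ 2]a_sqr -/a -f0E.
have [az|ap] := eqVneq a 0.
  have := fsq 0%N; rewrite az mul0r => h.
  have : f 0%N = 0 by apply/eqP; rewrite -sqrf_eq0 eq_le h sqr_ge0.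
  by move=> ->; rewrite mulr0.
have apos : 0 < a by rewrite lt_def ap a0.
have [kz|kp] := eqVneq kk 0.
  have := fsq 0%N; have := fbd 1%N; rewrite kz expr0n /= mulr0 mul0r => h1 h2.
  have : f 0%N ^+ 2 <= 0 by apply: le_trans h2 _; rewrite pmulr_rle0.
  move=> h; have : f 0%N = 0 by apply/eqP; rewrite -sqrf_eq0 eq_le h sqr_ge0.
  by move=> ->; rewrite mul0r.
have kpos : 0 < kk by rewrite lt_def kp kk0.
have pw n : a * f 0%N ^+ (2 ^ n)%N <= a ^+ (2 ^ n)%N * f n.
  elim: n => [|n IH]; first by rewrite expn0 !expr1.
  have s1 : (a * f 0%N ^+ (2 ^ n)%N) ^+ 2 <= (a ^+ (2 ^ n)%N * f n) ^+ 2.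
    have lhs0 : 0 <= a * f 0%N ^+ (2 ^ n)%N by rewrite mulr_ge0 ?exprn_ge0.
    by rewrite ler_sqr ?nnegrE // (le_trans lhs0 IH).
  have s2 : (a ^+ (2 ^ n)%N * f n) ^+ 2 <= a ^+ (2 ^ n)%N ^+ 2 * (a * f n.+1).
    by rewrite exprMn ler_wpM2l ?exprn_ge0 // fsq.
  have := le_trans s1 s2.
  rewrite expnS mul2n -addnn !exprD.
  move: (f 0%N ^+ _) (a ^+ _) (f n.+1) => P Q F h.
  rewrite -(ler_pM2l apos).
  have -> : a * (a * (P * P)) = (a * P) ^+ 2 by ring.
  by have -> : a * (Q * Q * F) = Q ^+ 2 * (a * F) by ring.
rewrite leNgt; apply/negP => hlt.
set t := f 0%N / (kk * a).
have t1 : 1 < t.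
  have ka : 0 < kk * a by rewrite mulr_gt0.
  have : (kk * a) / (kk * a) < f 0%N / (kk * a) by rewrite ltr_pM2r ?invr_gt0.
  by rewrite divff ?gt_eqF.
have [n hC] := unbounded_pow (`|MA| * hn x ^+ 2 / a) t1.
have h := le_trans (pw n) (ler_wpM2l (exprn_ge0 (2 ^ n)%N a0) (fbd n)).
move: h hC; set N := (2 ^ n)%N => h hC.
have E1 : t ^+ N = (a * f 0%N ^+ N) / (a * kk ^+ N * a ^+ N).
  rewrite /t exprMn exprVn exprMn; field.
  by rewrite ?(expf_neq0 _ ap) ?(expf_neq0 _ kp) ?ap ?kp.
have E2 : `|MA| * hn x ^+ 2 / a = (a ^+ N * (`|MA| * kk ^+ N * hn x ^+ 2)) / (a * kk ^+ N * a ^+ N).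
  field.
  by rewrite ?(expf_neq0 _ ap) ?(expf_neq0 _ kp) ?ap ?kp.
have D : 0 < a * kk ^+ N * a ^+ N by rewrite !mulr_gt0 ?exprn_gt0.
have : t ^+ N <= `|MA| * hn x ^+ 2 / a.
  rewrite E1 E2; apply: ler_wpM2r => //; by rewrite invr_ge0 ltW.
by move=> h'; have := lt_le_trans hC h'; rewrite ltxx.
Qed.

Lemma an_unit : (exists x, A x != 0) -> exists x0, an x0 = 1.
Proof.
move=> [x Ax].
have hp : 0 < an x.
  rewrite lt_def an_ge0 andbT; apply/eqP => h0.
  move/eqP: Ax; apply.
  apply: hn_eq0.
  have := aCS x (A x); rewrite h0 mul0r => h.
  have h1 : nc (ip (A x) (A x)) = 0 by apply/eqP; rewrite eq_le h nc_ge0.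
  have : cRe (ip (A x) (A x)) = 0.
    have := absRe_nc (ip (A x) (A x)); rewrite h1 normr_le0 => /eqP //.
  by rewrite /hnorm => ->; rewrite sqrtr0.
exists ((an x)^-1%:C%C *: x).
by rewrite aZr ger0_norm ?invr_ge0 ?an_ge0 // mulVf // gt_eqF.
Qed.

Lemma opn_bound T : (exists x0, an x0 = 1) ->
  (exists M, forall x, an (T x) <= M * an x) ->
  (forall (r : R) x, T (r%:C%C *: x) = r%:C%C *: T x) ->
  0 <= opnormA ip A T /\ forall x, an (T x) <= opnormA ip A T * an x.
Proof.
move=> [x0 hx0] [M hM] hZ.
rewrite /opnormA; set S := (X in sup X).
have Sx0 : S (an (T x0)) by exists x0.
have hs : has_sup S.
  split; first by exists (an (T x0)).
  exists M => r [x [hx ->]]; have := hM x; rewrite hx mulr1.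
  done.
have ub := sup_upper_bound hs.
have s0 : 0 <= sup S by apply: le_trans (an_ge0 (T x0)) (ub _ Sx0).
split => // x.
have [p0|pn0] := eqVneq (an x) 0.
  by rewrite p0 mulr0; have := hM x; rewrite p0 mulr0.
have pp : 0 < an x by rewrite lt_def pn0 an_ge0.
have hx' : an ((an x)^-1%:C%C *: x) = 1.
  by rewrite aZr ger0_norm ?invr_ge0 ?an_ge0 // mulVf.
have := ub _ (ex_intro _ _ (conj hx' erefl)).
rewrite hZ aZr ger0_norm ?invr_ge0 ?an_ge0 //.
by rewrite ler_pdivrMl // mulrC.
Qed.

Lemma sharp_abound T X (c : R) : is_bop ip T -> is_sharp ip A T X -> 0 <= c ->
  (forall x, an (T x) <= c * an x) -> forall y, an (X y) <= c * an y.
Proof.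
move=> hT [Ts [hadj [hAX _]]] c0 hc y.
have e : an (X y) ^+ 2 = cRe (ip (A (T (X y))) y).
  by rewrite a_sqr hAX ipC -hadj cReJ -Asa.
have h : an (X y) ^+ 2 <= c * an (X y) * an y.
  rewrite e; apply: le_trans (aCS_Re _ _) _.
  by rewrite ler_wpM2r ?an_ge0.
have [h0|hn0'] := eqVneq (an (X y)) 0; first by rewrite h0 mulr_ge0 ?an_ge0.
have hp : 0 < an (X y) by rewrite lt_def hn0' an_ge0.
by rewrite expr2 [c * _]mulrC -mulrA ler_pM2l in h.
Qed.

Lemma cross T Y : is_sharp ip A T Y -> forall u w, ip (A (T u)) w = ip (A u) (Y w).
Proof. move=> [Ts [hadj [hAX _]]] u w. by rewrite Asa hadj -hAX -Asa. Qed.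
End Hil.

Lemma bnd_ge (R : realType) (a b c s t X : R) : 0 <= a -> 0 <= b -> 0 <= c ->
  0 <= s -> 0 <= t -> s ^+ 2 + t ^+ 2 = 1 -> 0 <= X ->
  X ^+ 2 <= a ^+ 2 * s ^+ 2 + b ^+ 2 * t ^+ 2 + 2 * c * s * t -> X <= bnd a b c.
Proof.
move=> a0 b0 c0 s0 t0 st X0 hX.
rewrite /bnd.
set p := a ^+ 2; set q := b ^+ 2.
set D := Num.sqrt ((p - q) ^+ 2 + 4 * c ^+ 2).
have D0 : 0 <= D := sqrtr_ge0 _.
have D2 : D ^+ 2 = (p - q) ^+ 2 + 4 * c ^+ 2.
  by rewrite sqr_sqrtr // addr_ge0 ?sqr_ge0 ?mulr_ge0.
have Dge : forall r, r ^+ 2 <= D ^+ 2 -> r <= D.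
  move=> r hr; case: (lerP r 0) => hr0; first exact: le_trans hr0 D0.
  by rewrite -ler_sqr ?nnegrE // ltW.
have c2 := sqr_ge0 c.
have Dpq : p - q <= D by apply: Dge; rewrite D2; lra.
have Dqp : q - p <= D by apply: Dge; rewrite D2 -sqrrN opprB; lra.
set u := (q - p + D) / 2; set v := (p - q + D) / 2.
have u0 : 0 <= u by rewrite /u divr_ge0 //; lra.
have v0 : 0 <= v by rewrite /v divr_ge0 //; lra.
have uv : u * v = c ^+ 2.
  rewrite /u /v.
  have -> : (q - p + D) / 2 * ((p - q + D) / 2) = (D ^+ 2 - (p - q) ^+ 2) / 4 by field.
  by rewrite D2; field.
have key : 2 * c * s * t <= u * s ^+ 2 + v * t ^+ 2.
  have [uz|un] := eqVneq u 0.
    have : c ^+ 2 = 0 by rewrite -uv uz mul0r.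
    move/eqP; rewrite sqrf_eq0 => /eqP ->; rewrite uz.
    by rewrite mulr0 !mul0r add0r; apply: mulr_ge0 => //; apply: sqr_ge0.
  have up : 0 < u by rewrite lt_def un u0.
  rewrite -(ler_pM2l up).
  have : 0 <= (u * s - c * t) ^+ 2 := sqr_ge0 _.
  have -> : u * (u * s ^+ 2 + v * t ^+ 2) = (u * s) ^+ 2 + (u * v) * t ^+ 2 by ring.
  rewrite uv; move=> h; nra.
have lam : X ^+ 2 <= (p + q + D) / 2.
  apply: le_trans hX _.
  have -> : (p + q + D) / 2 = (p + u) * s ^+ 2 + (q + v) * t ^+ 2.
    have -> : (p + u) * s ^+ 2 + (q + v) * t ^+ 2 = (p + q + D) / 2 * (s ^+ 2 + t ^+ 2).
      by rewrite /u /v; field.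
    by rewrite st mulr1.
  rewrite /p /q; lra.
have B0 : 0 <= Num.sqrt 2 / 2 * Num.sqrt (p + q + D).
  by rewrite mulr_ge0 ?divr_ge0 ?sqrtr_ge0.
rewrite -ler_sqr ?nnegrE //.
rewrite exprMn expr_div_n !sqr_sqrtr //; last by rewrite /p /q addr_ge0 ?addr_ge0 ?sqr_ge0.
  apply: le_trans lam _; rewrite le_eqVlt; apply/orP; left; apply/eqP; field.
all: by [].
Qed.

Lemma sq_le (R : realType) (u w : R) : 0 <= u -> u <= w -> u ^+ 2 <= w ^+ 2.
Proof. move=> u0 uw; rewrite ler_sqr ?nnegrE //; exact: le_trans uw. Qed.

Lemma bnd_ge0 (R : realType) (a b c : R) : 0 <= bnd a b c.
Proof. by rewrite /bnd mulr_ge0 ?divr_ge0 ?sqrtr_ge0. Qed.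

Theorem theorem2p16 (R : realType) (V : lmodType R[i]) (ip : V -> V -> R[i])
  (A P Q R' S Psh Qsh Rsh Ssh : V -> V) :
  is_hilbert ip -> is_positive ip A -> (exists x, A x != 0) ->
  in_BA ip A P -> in_BA ip A Q -> in_BA ip A R' -> in_BA ip A S ->
  is_sharp ip A P Psh -> is_sharp ip A Q Qsh ->
  is_sharp ip A R' Rsh -> is_sharp ip A S Ssh ->
  let nA := opnormA ip A in
  let mu := bnd (nA P) (nA Q) (nA (Psh \o Q)) + bnd (nA R') (nA S) (nA (Ssh \o R')) in
  let nu := bnd (nA P) (nA R') (nA (P \o Rsh)) + bnd (nA Q) (nA S) (nA (S \o Qsh)) in
  numradA (ip2 ip) (diag2 A) (opmx2 P Q R' S) <= Num.min mu nu.
Proof.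
move=> hH hA hA0 hP hQ hR hS hPs hQs hRs hSs; cbv zeta; set nA := opnormA ip A.
case: hP => bP _; case: hQ => bQ _; case: hR => bR _; case: hS => bS _.
have hx0 := an_unit hH hA hA0.
have homT T : is_bop ip T -> forall (r : R) x, T (r%:C%C *: x) = r%:C%C *: T x.
  by move=> [Tl _] r x; apply: linZ.
have opT T X : is_bop ip T -> is_sharp ip A T X ->
    0 <= nA T /\ forall x, anorm ip A (T x) <= nA T * anorm ip A x.
  move=> bT hX; have [k [k0 hk]] := a_bound hH hA bT hX.
  have := opn_bound hH hA hx0 (ex_intro _ k hk) (homT _ bT). exact.
have [nP0 nPb] := opT _ _ bP hPs.
have [nQ0 nQb] := opT _ _ bQ hQs.
have [nR0 nRb] := opT _ _ bR hRs.
have [nS0 nSb] := opT _ _ bS hSs.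
have shP := sharp_abound hH hA bP hPs nP0 nPb.
have shQ := sharp_abound hH hA bQ hQs nQ0 nQb.
have shR := sharp_abound hH hA bR hRs nR0 nRb.
have shS := sharp_abound hH hA bS hSs nS0 nSb.
have opC T U (c1 c2 : R) : 0 <= c1 -> 0 <= c2 ->
    (forall x, anorm ip A (T x) <= c1 * anorm ip A x) ->
    (forall x, anorm ip A (U x) <= c2 * anorm ip A x) ->
    (forall (r : R) x, T (r%:C%C *: x) = r%:C%C *: T x) ->
    (forall (r : R) x, U (r%:C%C *: x) = r%:C%C *: U x) ->
    0 <= nA (T \o U) /\ forall x, anorm ip A (T (U x)) <= nA (T \o U) * anorm ip A x.
  move=> c10 c20 hT hU hTZ hUZ.
  apply: (opn_bound hH hA hx0).
    exists (c1 * c2) => x /=; apply: le_trans (hT _) _.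
    by rewrite -mulrA ler_wpM2l.
  by move=> r x /=; rewrite hUZ hTZ.
have [c1p c1b] := opC _ _ _ _ nP0 nQ0 shP nQb (sharpZ hH hA bP hPs) (homT _ bQ).
have [c2p c2b] := opC _ _ _ _ nS0 nR0 shS nRb (sharpZ hH hA bS hSs) (homT _ bR).
have [c3p c3b] := opC _ _ _ _ nP0 nR0 nPb shR (homT _ bP) (sharpZ hH hA bR hRs).
have [c4p c4b] := opC _ _ _ _ nS0 nQ0 nSb shQ (homT _ bS) (sharpZ hH hA bQ hQs).
rewrite /numradA; set Sn := (X in sup X).
have [x0 hx0'] := hx0.
have Sne : (Sn !=set0)%classic.
  by exists (complex.Re `|ip2 ip (diag2 A (opmx2 P Q R' S (x0, 0))) (x0, 0)|); exists (x0, 0); split => //;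
    rewrite /anorm /ip2 /diag2 /= (A0 hA) (ip0l hH) addr0.
apply: ge_sup => // r [[x1 x2] [hx ->]].
rewrite /anorm /ip2 /diag2 in hx; rewrite /ip2 /diag2 /opmx2 /=.
set s := anorm ip A x1; set t := anorm ip A x2.
have s0 : 0 <= s by apply: an_ge0.
have t0 : 0 <= t by apply: an_ge0.
have st : s ^+ 2 + t ^+ 2 = 1.
  rewrite /s /t !(a_sqr hA) -cReD.
  have h0 : 0 <= complex.Re (ip (A x1) x1 + ip (A x2) x2).
    by rewrite cReD addr_ge0 // -(a_sqr hA) sqr_ge0.
  by rewrite -(sqr_sqrtr h0) hx expr1n.
have s1 : s <= 1 by apply: (@le_trans _ _ (s ^+ 2 + t ^+ 2)); [|rewrite st] => //; nra.
have t1 : t <= 1 by apply: (@le_trans _ _ (s ^+ 2 + t ^+ 2)); [|rewrite st] => //; nra.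
rewrite normcE'.
rewrite le_min; apply/andP; split.
-
  apply: le_trans (nc_le_add _ _) _.
  set X1 := P x1 + Q x2; set X2 := R' x1 + S x2.
  have hX1 : anorm ip A X1 <= bnd (nA P) (nA Q) (nA (Psh \o Q)).
    apply: (bnd_ge nP0 nQ0 c1p s0 t0 st (sqrtr_ge0 _)).
    rewrite (aD_sqr hH hA) (cross hH hA hPs).
    have e1 := sq_le (sqrtr_ge0 _) (nPb x1); have e2 := sq_le (sqrtr_ge0 _) (nQb x2).
    rewrite !exprMn -/s -/t in e1 e2.
    have e3 : complex.Re (ip (A x1) (Psh (Q x2))) <= nA (Psh \o Q) * s * t.
      apply: le_trans (aCS_Re hH hA _ _) _; rewrite -/s.
      by rewrite [nA _ * s]mulrC -mulrA ler_wpM2l //; apply: c1b.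
    rewrite /anorm in e1 e2 *; lra.
  have hX2 : anorm ip A X2 <= bnd (nA R') (nA S) (nA (Ssh \o R')).
    apply: (bnd_ge nR0 nS0 c2p s0 t0 st (sqrtr_ge0 _)).
    rewrite (aD_sqr hH hA) (ipRe_sym hH) -(Asa hH hA) (cross hH hA hSs).
    have e1 := sq_le (sqrtr_ge0 _) (nRb x1); have e2 := sq_le (sqrtr_ge0 _) (nSb x2).
    rewrite !exprMn -/s -/t in e1 e2.
    have e3 : complex.Re (ip (A x2) (Ssh (R' x1))) <= nA (Ssh \o R') * s * t.
      apply: le_trans (aCS_Re hH hA _ _) _; rewrite -/t mulrC.
      by apply: ler_wpM2r => //; apply: c2b.
    rewrite /anorm in e1 e2 *; lra.
  have n1 : nc (ip (A X1) x1) <= bnd (nA P) (nA Q) (nA (Psh \o Q)) * s.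
    apply: le_trans (aCS hH hA _ _) _; by rewrite ler_wpM2r.
  have n2 : nc (ip (A X2) x2) <= bnd (nA R') (nA S) (nA (Ssh \o R')) * t.
    apply: le_trans (aCS hH hA _ _) _; by rewrite ler_wpM2r.
  have b1 := bnd_ge0 (nA P) (nA Q) (nA (Psh \o Q));
  have b2 := bnd_ge0 (nA R') (nA S) (nA (Ssh \o R')).
  have := ler_wpM2l b1 s1; have := ler_wpM2l b2 t1.
  rewrite !mulr1; move: n1 n2; set B1 := bnd _ _ _; set B2 := bnd _ _ _.
  rewrite [B1 * s]mulrC [B2 * t]mulrC.
  move=> *; lra.
-
  have ez : ip (A (P x1 + Q x2)) x1 + ip (A (R' x1 + S x2)) x2 =
      ip (A x1) (Psh x1 + Rsh x2) + ip (A x2) (Qsh x1 + Ssh x2).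
    rewrite !(AD hA) !(ipDl hH) !(ipDr hH) !(cross hH hA hPs) !(cross hH hA hQs)
      !(cross hH hA hRs) !(cross hH hA hSs).
    by rewrite addrACA.
  rewrite ez; apply: le_trans (nc_le_add _ _) _.
  set Y1 := Psh x1 + Rsh x2; set Y2 := Qsh x1 + Ssh x2.
  have hY1 : anorm ip A Y1 <= bnd (nA P) (nA R') (nA (P \o Rsh)).
    apply: (bnd_ge nP0 nR0 c3p s0 t0 st (sqrtr_ge0 _)).
    rewrite (aD_sqr hH hA).
    have -> : complex.Re (ip (A (Psh x1)) (Rsh x2)) = complex.Re (ip (A (P (Rsh x2))) x1).
      by rewrite (cross hH hA hPs) (ipRe_sym hH) -(Asa hH hA).
    have e1 := sq_le (sqrtr_ge0 _) (shP x1); have e2 := sq_le (sqrtr_ge0 _) (shR x2).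
    rewrite !exprMn -/s -/t in e1 e2.
    have e3 : complex.Re (ip (A (P (Rsh x2))) x1) <= nA (P \o Rsh) * s * t.
      apply: le_trans (aCS_Re hH hA _ _) _; rewrite -/s -mulrA [s * t]mulrC mulrA.
      by rewrite ler_wpM2r //; apply: c3b.
    rewrite /anorm in e1 e2 *; lra.
  have hY2 : anorm ip A Y2 <= bnd (nA Q) (nA S) (nA (S \o Qsh)).
    apply: (bnd_ge nQ0 nS0 c4p s0 t0 st (sqrtr_ge0 _)).
    rewrite (aD_sqr hH hA) -(cross hH hA hSs).
    have e1 := sq_le (sqrtr_ge0 _) (shQ x1); have e2 := sq_le (sqrtr_ge0 _) (shS x2).
    rewrite !exprMn -/s -/t in e1 e2.
    have e3 : complex.Re (ip (A (S (Qsh x1))) x2) <= nA (S \o Qsh) * s * t.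
      apply: le_trans (aCS_Re hH hA _ _) _; rewrite -/t.
      by rewrite ler_wpM2r //; apply: c4b.
    rewrite /anorm in e1 e2 *; lra.
  have n1 : nc (ip (A x1) Y1) <= s * bnd (nA P) (nA R') (nA (P \o Rsh)).
    apply: le_trans (aCS hH hA _ _) _; by rewrite ler_wpM2l.
  have n2 : nc (ip (A x2) Y2) <= t * bnd (nA Q) (nA S) (nA (S \o Qsh)).
    apply: le_trans (aCS hH hA _ _) _; by rewrite ler_wpM2l.
  have b1 := bnd_ge0 (nA P) (nA R') (nA (P \o Rsh));
  have b2 := bnd_ge0 (nA Q) (nA S) (nA (S \o Qsh)).
  have := ler_wpM2l b1 s1; have := ler_wpM2l b2 t1.
  rewrite !mulr1; move: n1 n2; set B1 := bnd _ _ _; set B2 := bnd _ _ _.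
  rewrite [B1 * s]mulrC [B2 * t]mulrC.
  move=> *; lra.
Qed.
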